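(* If $n=2p$ for a prime $p$, then $\pi\ge\lceil r/2\rceil(n-2q-m+1)$.
   Context: $G$ is a set of size $n$ and $G(\circ)$, $G(\ast)$ are distinct groups on $G$ with the same identity element. $\mathrm{diff}(\circ,\ast)=\{(a,b):a\circ b\ne a\ast b\}$, $\mathrm{dist}(\circ,\ast)=|\mathrm{diff}(\circ,\ast)|$, $\mathrm{dist}_a=|\{b:a\circ b\ne a\ast b\}|$; $H=\{a:\mathrm{dist}_a=0\}$, $h=|H|$; $K=\{a:\mathrm{dist}_a<n/3\}$, $k=|K|$; $m=\min\{\mathrm{dist}_a:\mathrm{dist}_a>0\}$. Standing assumption: $m\ge 3$. Let $q=\lceil n/3\rceil$ and the profit $\pi=\mathrm{dist}(\circ,\ast)-((k-h)m+(n-k)q)$. Let $R=\{(a,a)\in\mathrm{diff}(\circ,\ast):a\in K\}$, $r=|R|$. *)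

(* Defs.v *)
From mathcomp Require Import all_boot all_order all_algebra.
Set Implicit Arguments. Unset Strict Implicit. Unset Printing Implicit Defensive.

Section Defs.
Variable T : finType.

Definition is_group_law (op : T -> T -> T) (e : T) : Prop :=
  [/\ (forall a b c, op a (op b c) = op (op a b) c),
      (forall a, op e a = a /\ op a e = a)
    & (forall a, exists b, op a b = e /\ op b a = e)].

Variables (op1 op2 : T -> T -> T).

Definition diffset : {set T * T} := [set p | op1 p.1 p.2 != op2 p.1 p.2].
Definition dist : nat := #|diffset|.
Definition dista (a : T) : nat := #|[set b | op1 a b != op2 a b]|.
Definition Hset : {set T} := [set a | dista a == 0].
Definition hh : nat := #|Hset|.
(* K = {a : dist_a < n/3} ; with n = #|T|, dist_a < n/3 <-> 3 dist_a < n *)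
Definition Kset : {set T} := [set a | 3 * dista a < #|T|].
Definition kk : nat := #|Kset|.
(* m = min {dist_a : dist_a > 0}; the default #|T| is never attained
   as the minimum matters only when the set is nonempty (groups distinct),
   and every dist_a <= #|T|. *)
Definition mm : nat := \big[minn/#|T|]_(a | 0 < dista a) dista a.
Definition qq : nat := (#|T| + 2) %/ 3.
Definition profit : int :=
  (dist%:Z - ((kk%:Z - hh%:Z) * mm%:Z + (#|T|%:Z - kk%:Z) * qq%:Z))%R.
Definition Rset : {set T * T} := [set p in diffset | (p.1 == p.2) && (p.1 \in Kset)].
Definition rr : nat := #|Rset|.
End Defs.

(* Main.v *)
Require Import Defs.
From mathcomp Require Import all_boot all_order all_algebra.
Import GRing.Theory Num.Theory.
From HB Require Import structures.
From mathcomp Require Import all_boot all_order all_algebra all_fingroup all_solvable.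
From mathcomp Require Import zify.
Set Implicit Arguments. Unset Strict Implicit. Unset Printing Implicit Defensive.
Local Open Scope group_scope.

Lemma ord2p (gT : finGroupType) (p : nat) (y : gT) : prime p -> #|gT| = (2 * p)%N ->
  y ^+ 2 != 1 -> y ^+ p != 1 -> #[y] = (2 * p)%N.
Proof.
move=> pp cT y2 yp.
have d : (#[y] %| 2 * p)%N by rewrite -cT -cardsT order_dvdG ?inE.
have np2 : ~~ (#[y] %| 2)%N by rewrite order_dvdn.
have npp : ~~ (#[y] %| p)%N by rewrite order_dvdn.
have p0 := prime_gt0 pp.
have [pd|npd] := boolP (p %| #[y])%N.
  case/dvdnP: pd => j hj; rewrite hj in d npp *.
  have j2 : (j %| 2)%N by rewrite -(@dvdn_pmul2r p) // mulnC.
  have := dvdn_leq (isT : (0 < 2)%N) j2.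
  have o0 := order_gt0 y; rewrite hj in o0.
  case: j {hj d j2} npp o0 => [|[|[|j]]] //=; rewrite ?mul1n ?dvdnn //.
have cp : coprime #[y] p by rewrite coprime_sym prime_coprime.
by rewrite Gauss_dvdl // in d; rewrite d in np2.
Qed.

Lemma sqrt_fiber (gT : finGroupType) (p : nat) (c : gT) : prime p -> #|gT| = (2 * p)%N ->
  c != 1 -> (#|[set y : gT | (y * y == c)%g]| <= 2)%N.
Proof.
move=> pp cT c1.
have p0 := prime_gt0 pp.
case: (boolP [exists y : gT, ((y * y == c) && (y ^+ p != 1))%g]).
  case/existsP => y /andP [/eqP yc yp].
  have y2 : y ^+ 2 != 1 by rewrite expgS expg1 yc.
  have oy := ord2p pp cT y2 yp.
  have cy : <[y]> = [set: gT].
    apply/eqP; rewrite eqEcard subsetT /= cardsT cT -oy //.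
  apply: (@leq_trans #|[set y; y ^+ p.+1]|); last by rewrite cards2; case: (_ != _).
  apply/subset_leq_card/subsetP => z; rewrite !inE => /eqP zc.
  have : z \in <[y]> by rewrite cy inE.
  case/cyclePmin => k; rewrite oy => kl zk.
  have k0 : k != 0%N by apply: contra_eqN zc => /eqP k0; rewrite zk k0 expg0 mul1g eq_sym.
  have : y ^+ (2 * k.-1) = 1.
    apply: (mulIg (y ^+ 2)); rewrite -expgD mul1g.
    have -> : (2 * k.-1 + 2 = k + k)%N by lia.
    by rewrite expgD -zk zc expgS expg1.
  move/eqP; rewrite -order_dvdn oy => /dvdnP [j hj].
  have : (j = 0 \/ j = 1)%N by nia.
  case=> jv; rewrite jv in hj; rewrite zk.
    have -> : k = 1%N by lia.
    by rewrite expg1 eqxx.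
  have -> : k = p.+1 by nia.
  by rewrite eqxx orbT.
rewrite negb_exists => /forallP h.
apply: (@leq_trans #|[set c ^+ (p.+1)./2]|); last by rewrite cards1.
apply/subset_leq_card/subsetP => z; rewrite !inE => /eqP zc.
have := h z; rewrite zc eqxx /= negbK => /eqP zp.
have podd : odd p.
  case: (even_prime pp) => // p2.
  have : z ^+ 2 = 1 by rewrite -p2.
  by rewrite expgS expg1 zc => c1'; rewrite c1' eqxx in c1.
rewrite -zc.
have e : z * z = z ^+ 2 by rewrite expgS expg1.
rewrite e -expgM.
have -> : (2 * uphalf p = p.+1)%N.
  have := odd_double_half p; rewrite uphalf_half podd -addnn; lia.
by rewrite expgSr zp mul1g.
Qed.

Local Close Scope group_scope.
Section Mk.
Variables (T : finType) (op : T -> T -> T) (e : T) (inv : T -> T).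
Hypotheses (A : associative op) (L1 : left_id e op) (LV : left_inverse e inv op).
Definition gT : Type := T.
HB.instance Definition _ := Finite.on gT.
HB.instance Definition _ := Finite_isGroup.Build gT A L1 LV.
Definition toT (x : gT) : T := x.
Lemma toT_inj : injective toT. Proof. by []. Qed.
Lemma fiber_op p c : prime p -> #|T| = (2 * p)%N -> c != e ->
  #|[set y : T | op y y == c]| <= 2.
Proof.
move=> pp cT ce.
have e0 : toT @: [set: gT] = [set: T].
  apply/setP => x; rewrite !inE; apply/imsetP; exists x; rewrite ?inE //.
have e1 : #|[set: gT]| = #|T|.
  by rewrite -(card_imset _ toT_inj) e0 cardsT.
have h0 := (@sqrt_fiber gT p c pp).
have e2 : [set y : T | op y y == c] = toT @: [set y : gT | (y * y == c)%g].
  apply/setP => x; rewrite inE; apply/idP/imsetP.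
    by move=> h; exists x; rewrite ?inE.
  by case=> y; rewrite inE => h ->.
rewrite e2 card_imset //; apply: h0 => //.
by rewrite -cardsT e1.
Qed.
End Mk.

Section Main.
Variables (T : finType) (op1 op2 : T -> T -> T) (e : T).
Hypotheses (G1 : is_group_law op1 e) (G2 : is_group_law op2 e).

Local Notation d := (dista op1 op2).
Local Notation S a := [set b | op1 a b != op2 a b].

Lemma lcancel1 a x y : op1 a x = op1 a y -> x = y.
Proof.
case: G1 => A I V h; have [b [_ hb]] := V a.
by rewrite -(proj1 (I x)) -(proj1 (I y)) -hb -!A h.
Qed.

Lemma rcancel2 a x y : op2 x a = op2 y a -> x = y.
Proof.
case: G2 => A I V h; have [b [hb _]] := V a.
by rewrite -(proj2 (I x)) -(proj2 (I y)) -hb !A h.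
Qed.

Lemma de : d e = 0.
Proof.
rewrite /dista; apply/eqP; rewrite cards_eq0; apply/eqP/setP => b; rewrite !inE.
case: G1 => _ I1 _; case: G2 => _ I2 _.
by rewrite (proj1 (I1 b)) (proj1 (I2 b)) eqxx.
Qed.

Lemma key a : op1 a a != op2 a a -> #|T| <= d (op1 a a) + 2 * d a.
Proof.
move=> ne; set c := op1 a a.
have sub : ~: S c \subset S a :|: (op1 a) @^-1: S a.
  apply/subsetP => x; rewrite !inE negbK => /eqP hx.
  apply/negPn/negP; rewrite negb_or !negbK => /andP [/eqP h1 /eqP h2].
  case: G1 => A1 _ _; case: G2 => A2 _ _.
  have : op2 c x = op2 (op2 a a) x.
    by rewrite -hx /c -A1 h2 h1 A2.
  by move/rcancel2 => h; move: ne; rewrite -/c h eqxx.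
have := leq_trans (subset_leq_card sub) (leq_card_setU _ _).
have inj : injective (op1 a) by move=> x y; apply: lcancel1.
rewrite card_preimset // => h.
have := cardsC (S c); rewrite /dista; lia.
Qed.

Lemma dist_sum : dist op1 op2 = \sum_a d a.
Proof.
rewrite /dist -sum1_card big_mkcond /=.
transitivity (\sum_a \sum_b (if (a, b) \in diffset op1 op2 then 1 else 0)).
  by rewrite pair_big; apply: eq_big => // -[a b].
apply: eq_bigr => a _; rewrite /dista -sum1_card big_mkcond /=.
by rewrite [RHS]big_mkcond; apply: eq_bigr => b _; rewrite !inE.
Qed.

Local Notation n := #|T|.
Local Notation K := (Kset op1 op2).
Local Notation H := (Hset op1 op2).
Local Notation m := (mm op1 op2).
Local Notation q := (qq T).
Definition R1 := [set a in K | op1 a a != op2 a a].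
Definition C := (fun a => op1 a a) @: R1.

Lemma sum_in (A : {set T}) : \sum_a (a \in A : nat) = #|A|.
Proof. by rewrite -sum1_card [RHS]big_mkcond; apply: eq_bigr => a _; case: (a \in A). Qed.

Hypothesis n0 : 0 < n.

Lemma HK : H \subset K.
Proof. by apply/subsetP => a; rewrite !inE => /eqP ->. Qed.

Lemma qqE : q = (n + 2) %/ 3. Proof. by []. Qed.

Definition w a := m * (a \in K :\: H) + q * (a \in ~: K).

Lemma sumw : \sum_a w a = (kk op1 op2 - hh op1 op2) * m + (n - kk op1 op2) * q.
Proof.
rewrite big_split /= -!big_distrr /= !sum_in cardsD (setIidPr HK).
have := cardsC K; rewrite /kk /hh. move=> <-; rewrite addKn mulnC [q * _]mulnC.
by []. Qed.

Lemma bigmin_le (s : seq T) (P : pred T) (F : T -> nat) x a :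
  a \in s -> P a -> \big[minn/x]_(i <- s | P i) F i <= F a.
Proof.
elim: s => // b s IH; rewrite inE big_cons => /orP [/eqP <- -> | hs Pa]; first by rewrite geq_minl.
case: (P b); last exact: IH.
by rewrite (leq_trans (geq_minr _ _)) // IH.
Qed.

Lemma m_le a : 0 < d a -> m <= d a.
Proof. by move=> h; rewrite /mm; apply: bigmin_le; rewrite ?mem_index_enum. Qed.

Lemma wle a : w a <= d a.
Proof.
rewrite /w /Kset /Hset !inE.
case: (boolP (3 * d a < n)) => hK /=; case: (boolP (d a == 0)) => hH /=; rewrite ?muln0 ?muln1 ?addn0 ?add0n //.
  by apply: m_le; rewrite lt0n.
all: rewrite -leqNgt in hK; rewrite /qq; try move/eqP: hH => hH; lia.
Qed.

Lemma R1C a : a \in R1 -> (3 * d a < n) /\ 3 * d (op1 a a) > n /\ (m <= d a).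
Proof.
rewrite !inE => /andP [hK ne]; have := key ne.
split; first by [].
split; first lia.
apply: m_le; rewrite lt0n; apply/eqP => /eqP; rewrite cards_eq0 => /eqP/setP /(_ a).
by rewrite !inE ne.
Qed.

Lemma CnK c : c \in C -> c \notin K.
Proof. by case/imsetP => a /R1C [_ [h _]] ->; rewrite inE -leqNgt ltnW. Qed.

Lemma R1K a : a \in R1 -> (a \in K) && (a \notin H).
Proof.
move=> h; have [_ [_ hm]] := R1C h; move: h; rewrite !inE => /andP [-> ne] /=.
apply/eqP => /eqP; rewrite cards_eq0 => /eqP/setP /(_ a).
by rewrite !inE ne.
Qed.

Lemma ex_bound : \sum_(a in C) (d a - q) + \sum_(a in R1) (d a - m) <= \sum_a (d a - w a).
Proof.
rewrite [X in X + _]big_mkcond [X in _ + X]big_mkcond -big_split /=.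
apply: leq_sum => a _.
case: (boolP (a \in C)) => hC; case: (boolP (a \in R1)) => hR //=.
- by move: (CnK hC); case/andP: (R1K hR) => ->.
- by have := CnK hC; rewrite addn0 /w !inE => /negbTE -> /=; rewrite andbF muln0 add0n muln1.
- by case/andP: (R1K hR) => hK hH; rewrite add0n /w in_setD in_setC hK hH /= muln0 muln1 addn0.
Qed.

Lemma dist_split : dist op1 op2 = \sum_a w a + \sum_a (d a - w a).
Proof. by rewrite dist_sum -big_split /=; apply: eq_bigr => a _; rewrite subnKC ?wle. Qed.

Lemma percbound : \sum_(a in C) (d a - q) + \sum_(a in R1) (d a - m) >= #|C| * (n + 1 - 2 * q - m).
Proof.
rewrite [\sum_(a in R1) _](partition_big (fun a => op1 a a) (fun c => c \in C)) /=; last first.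
  by move=> a ha; apply/imsetP; exists a.
rewrite -big_split /= -sum_nat_const; apply: leq_sum => c /imsetP [a ha ->].
rewrite (bigD1 a) /=; last by rewrite ha eqxx.
have [h1 [h2 h3]] := R1C ha.
have h4 : n <= d (op1 a a) + 2 * d a by apply: key; move: ha; rewrite inE => /andP [].
apply: (leq_trans _ (leq_add (leqnn _) (leq_addr _ _))).
rewrite qqE; have := divn_eq (#|T| + 2) 3; have := ltn_pmod (#|T| + 2) (isT : 0 < 3).
set qv := (_ %/ 3); set rv := (_ %% 3); clearbody qv rv; move=> hr hqd; move: h1 h2 h4 hr hqd; set N := #|T|; clearbody N; lia.
Qed.


Definition inv1 x := odflt x [pick b | op1 b x == e].

Lemma R1card p : prime p -> #|T| = (2 * p)%N -> #|R1| <= 2 * #|C|.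
Proof.
move=> pp cT.
have [A1 I1 V1] := G1.
have Li : left_id e op1 by move=> x; case: (I1 x).
have LV : left_inverse e inv1 op1.
  move=> x; rewrite /inv1; case: pickP => [b /eqP //| h].
  by have [b [_ hb]] := V1 x; move: (h b); rewrite hb eqxx.
rewrite -sum1_card (partition_big (fun a => op1 a a) (fun c => c \in C)) /=; last first.
  by move=> a ha; apply/imsetP; exists a.
rewrite mulnC -sum_nat_const; apply: leq_sum => c hc.
rewrite sum1dep_card.
have ce : c != e.
  case/imsetP: hc => a ha ->; have [_ [h2 _]] := R1C ha.
  apply/eqP => he; move: h2; rewrite he de; lia.
apply: leq_trans (fiber_op A1 Li LV pp cT ce).
by apply/subset_leq_card/subsetP => x; rewrite !inE => /andP [_ ->].
Qed.

Lemma rrE : rr op1 op2 = #|R1|.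
Proof.
have e0 : Rset op1 op2 = (fun a => (a, a)) @: R1.
  apply/setP => -[a b]; rewrite !inE /=; apply/idP/imsetP.
    case/andP => ne /andP [/eqP eab hK]; rewrite -eab in ne *; exists a => //; by rewrite !inE hK ne.
  by case=> a' ; rewrite !inE => /andP [hK ne] [-> ->]; rewrite ne eqxx hK.
by rewrite /rr e0 card_imset // => x y /(f_equal fst).
Qed.
End Main.

Local Open Scope ring_scope.

Theorem lemma9p3 (T : finType) (op1 op2 : T -> T -> T) (e : T) (p : nat) :
  is_group_law op1 e -> is_group_law op2 e ->
  (exists a b, op1 a b <> op2 a b) ->
  (3 <= mm op1 op2)%N ->
  prime p -> #|T| = (2 * p)%N ->
  ((((rr op1 op2 + 1) %/ 2)%N)%:Z *
     (#|T|%:Z - 2 * (qq T)%:Z - (mm op1 op2)%:Z + 1)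
   <= profit op1 op2).
Proof.
move=> G1 G2 _ m3 pp cT.
have n0 : (0 < #|T|)%N by rewrite cT muln_gt0 (prime_gt0 pp).
have E1 := dist_split op1 op2 n0.
have E2 := sumw op1 op2 n0.
have E3 := leq_trans (percbound G1 G2 n0) (ex_bound G1 G2 n0).
have E4 := R1card G1 G2 n0 pp cT.
have E5 := rrE op1 op2.
have hk : (hh op1 op2 <= kk op1 op2)%N by apply: subset_leq_card (HK op1 op2 n0).
have kn : (kk op1 op2 <= #|T|)%N by apply: max_card.
rewrite /profit.
move: E1 E2 E3 E4 E5 hk kn.
set D := dist op1 op2; set W := \sum_a w op1 op2 a; set X := \sum_a _.
set c := #|C op1 op2|; set r1 := #|R1 op1 op2|; set r := rr op1 op2.
set k := kk op1 op2; set hv := hh op1 op2; set m := mm op1 op2; set q := qq T.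
set N := #|T|.
clearbody D W X c r1 r k hv m q N.
move=> E1 E2 E3 E4 E5 hk kn.
have R2 : ((r + 1) %/ 2 <= c)%N by rewrite E5; lia.
case: (leqP (2 * q + m) (N + 1)) => hB.
  have H1 : (((r + 1) %/ 2)%N * (N + 1 - 2 * q - m) <= c * (N + 1 - 2 * q - m))%N by apply: leq_mul.
  move: R2 H1; set R := ((r + 1) %/ 2)%N; clearbody R => R2 H1.
  have H2 : ((k - hv) * m + (N - k) * q + R * (N + 1 - 2 * q - m) <= D)%N by lia.
  nia.
move: R2; set R := ((r + 1) %/ 2)%N; clearbody R => R2.
nia.
Qed.
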